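(* Let $N$ be an odd prime and let $D$ be a square-free integer such that the Legendre symbol satisfies $\left(\frac{D}{N}\right) = -1$. Write $N + 1 = 2^s u$, where $u$ is an odd integer and $s \ge 1$. For any $w \in \mathcal{G}_N(D) \setminus \{1, -1\}$, one of the following conditions must hold: (a) $w^u \equiv 1 \pmod N$; (b) $w^{2^r u} \equiv -1 \pmod N$ for some integer $0 \le r < s$.
   Context: For an integer $n \ge 2$ and a square-free integer $D$: if $D \equiv 2,3 \pmod 4$, let $\mathcal{I}_n(D) = \{a + b\sqrt{D} : a,b \in \mathbb{Z}/n\mathbb{Z}\}$ (the ring $\mathbb{Z}[\sqrt D]/n\mathbb{Z}[\sqrt D]$) and $\mathcal{G}_n(D) = \{a + b\sqrt{D} \in \mathcal{I}_n(D) : a^2 - Db^2 \equiv 1 \pmod n\}$; if $D \equiv 1 \pmod 4$, let $\omega = \frac{1+\sqrt D}{2}$, $\mathcal{I}_n(D) = \{a + b\omega : a,b \in \mathbb{Z}/n\mathbb{Z}\}$ (the ring $\mathbb{Z}[\omega]/n\mathbb{Z}[\omega]$) and $\mathcal{G}_n(D) = \{a + b\omega \in \mathcal{I}_n(D) : a^2 + ab + \frac{1-D}{4} b^2 \equiv 1 \pmod n\}$. Powers are computed in $\mathcal{I}_n(D)$ and a congruence $x \equiv y \pmod n$ for $x,y \in \mathcal{I}_n(D)$ means equality in $\mathcal{I}_n(D)$. *)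

(* Defs.v *)
From mathcomp Require Import all_boot all_order all_algebra.
Set Implicit Arguments. Unset Strict Implicit. Unset Printing Implicit Defensive.
Import Order.TTheory GRing.Theory Num.Theory.
Local Open Scope ring_scope.

(* Square-free integer: no square of a prime divides it (so 0 is not square-free). *)
Definition squarefree (D : int) : Prop :=
  forall p : nat, prime p -> ~ (((p ^ 2)%N %| `|D|%N)%N).

Definition legendre (D : int) (p : nat) : int :=
  if (p%:Z %| D)%Z then 0
  else if [exists x : 'I_p, (p%:Z %| (x%:Z ^+ 2 - D))%Z] then 1 else -1.

(* Elements of I_n(D): pairs (a,b) in Z/nZ, standing for a + b*sqrt(D) when
   D = 2,3 mod 4, and for a + b*omega, omega = (1+sqrt D)/2, when D = 1 mod 4. *)
Definition elt (n : nat) := ('Z_n * 'Z_n)%type.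

Definition D_is_1mod4 (D : int) : bool := ((D %% 4)%Z == 1).

(* Multiplication in I_n(D). For D = 1 mod 4, omega^2 = omega + (D-1)/4. *)
Definition emul (n : nat) (D : int) (x y : elt n) : elt n :=
  let: (a, b) := x in let: (c, d) := y in
  if D_is_1mod4 D then
    (a * c + b * d * ((D - 1) %/ 4)%Z%:~R, a * d + b * c + b * d)
  else
    (a * c + D%:~R * b * d, a * d + b * c).

Definition eone (n : nat) : elt n := (1, 0).
Definition emone (n : nat) : elt n := (-1, 0).

Definition epow (n : nat) (D : int) (x : elt n) (k : nat) : elt n :=
  iter k (emul D x) (eone n).

Definition enorm (n : nat) (D : int) (x : elt n) : 'Z_n :=
  let: (a, b) := x in
  if D_is_1mod4 D then a ^+ 2 + a * b + ((1 - D) %/ 4)%Z%:~R * b ^+ 2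
  else a ^+ 2 - D%:~R * b ^+ 2.

Definition inG (n : nat) (D : int) (x : elt n) : Prop := enorm D x = 1.

(* Main.v *)
Require Import Defs.
From mathcomp Require Import all_boot all_order all_algebra all_field.
From mathcomp Require Import ring.
Import Order.TTheory GRing.Theory Num.Theory.
Local Open Scope ring_scope.
Set Implicit Arguments. Unset Strict Implicit. Unset Printing Implicit Defensive.

Section Psi.
Variables (N : nat) (K : nzRingType) (chK : N \in [pchar K]).

Definition psi (x : 'Z_N) : K := (val x)%:R.

Lemma N_gt1 : (1 < N)%N. Proof. exact: prime_gt1 (pcharf_prime chK). Qed.

Lemma psi_nat n : psi (n%:R) = n%:R.
Proof.
rewrite /psi Zp_nat /= Zp_cast ?N_gt1 //.
by rewrite [in RHS](divn_eq n N) natrD natrM (pcharf0 chK) mulr0 add0r.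
Qed.

Lemma psiD x y : psi (x + y) = psi x + psi y.
Proof. by rewrite -(natr_Zp x) -(natr_Zp y) -natrD !psi_nat natrD. Qed.

Lemma psiM x y : psi (x * y) = psi x * psi y.
Proof. by rewrite -(natr_Zp x) -(natr_Zp y) -natrM !psi_nat natrM. Qed.

Lemma psi0 : psi 0 = 0. Proof. exact: (psi_nat 0). Qed.
Lemma psi1 : psi 1 = 1. Proof. exact: (psi_nat 1). Qed.

Lemma psiN x : psi (- x) = - psi x.
Proof. by apply/eqP; rewrite -subr_eq0 opprK -psiD addNr psi0. Qed.

Lemma psiB x y : psi (x - y) = psi x - psi y.
Proof. by rewrite psiD psiN. Qed.

Lemma psi_int z : psi (z%:~R) = z%:~R.
Proof. by case: z => n; rewrite ?NegzE ?mulrNz ?psiN psi_nat. Qed.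

Lemma psi_inj : injective psi.
Proof.
move=> x y /eqP; rewrite -subr_eq0 -psiB /psi -(dvdn_pcharf chK) => hd.
have hlt : (val (x - y)%R < N)%N.
  by apply: (leq_trans (ltn_ord _)); rewrite Zp_cast ?N_gt1.
apply/eqP; rewrite -subr_eq0; apply/eqP/val_inj.
move: hd hlt; case: (val (x - y)) => // k hd hlt.
by have := dvdn_leq (ltn0Sn k) hd; rewrite leqNgt hlt.
Qed.

Lemma psi_fix x : psi x ^+ N = psi x.
Proof. by have := pFrobenius_aut_nat chK (val x); rewrite pFrobenius_autE. Qed.

End Psi.
Definition cp (N : nat) (D : int) : 'Z_N := if D_is_1mod4 D then 1 else 0.
Definition cq (N : nat) (D : int) : 'Z_N :=
  if D_is_1mod4 D then ((D - 1) %/ 4)%Z%:~R else D%:~R.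

Lemma div4 (D : int) : D_is_1mod4 D ->
  ((D - 1) %/ 4)%Z * 4 = D - 1 /\ ((1 - D) %/ 4)%Z = - ((D - 1) %/ 4)%Z.
Proof.
rewrite /D_is_1mod4 => /eqP h.
have e : D - 1 = (D %/ 4)%Z * 4 by rewrite {1}(divz_eq D 4) h addrK.
rewrite e mulzK //; split => //.
have -> : 1 - D = (- (D %/ 4)%Z) * 4 by rewrite mulNr -e opprB.
by rewrite mulzK.
Qed.

Section Field.
Variables (N : nat) (K : fieldType) (chK : N \in [pchar K]).
Local Notation psi := (@psi N K).

Lemma nosq (D : int) : legendre D N = -1 -> forall z : int, ((z ^+ 2 - D)%:~R : K) != 0.
Proof.
move=> hl z; apply/negP => /eqP h0.
have N1 := N_gt1 chK.
have N0 : (N%:Z != 0) by rewrite eqz_nat; case: (N) N1.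
have hm0 : (0 <= z %% N)%Z := modz_ge0 z N0.
have hmN : ((z %% N)%Z < N) by apply: ltz_pmod; rewrite ltz_nat ltnW.
set m := `|(z %% N)%Z|%N.
have hmz : m%:Z = (z %% N)%Z by rewrite /m gez0_abs.
have hm : (m < N)%N by rewrite -ltz_nat hmz.
move: hl; rewrite /legendre; case: ifP => // _; case: ifP => // /negbT /existsPn /(_ (Ordinal hm)) /negP H _; apply: H.
rewrite /= (dvdz_pcharf chK) hmz.
have hK : ((z %% N)%Z%:~R : K) = z%:~R.
  have e : (z %% N)%Z = z - (z %/ N)%Z * N by [].
  by rewrite e intrB intrM -pmulrn (pcharf0 chK) mulr0 subr0.

by rewrite rmorphB rmorphXn /= hK -rmorphXn -rmorphB /= h0.
Qed.

End Field.

Section Field2.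
Variables (N : nat) (K : fieldType) (chK : N \in [pchar K]).
Local Notation psi := (@psi N K).

Lemma noroot D (hl : legendre D N = -1) (x : 'Z_N) :
  psi x ^+ 2 != psi (cp N D) * psi x + psi (cq N D).
Proof.
apply/negP => /eqP h.
rewrite /cp /cq in h; case h4: (D_is_1mod4 D) in h.
- rewrite (psi1 chK) (psi_int chK) mul1r in h; have [e1 _] := div4 h4.
  apply/negP: (nosq chK hl (2 * (val x)%:Z - 1)).
  have eD : D = ((D - 1) %/ 4)%Z * 4 + 1 by rewrite e1 subrK.
  rewrite [X in _ - X]eD !(intrB, intrD, intrM, rmorphXn) /= -!pmulrn.
  move: h; rewrite /psi; set a := (val x)%:R; set k := ((D - 1) %/ 4)%Z%:~R => h.
  have -> : ((1 *+ 2) * a - 1) ^+ 2 - (k * (1 *+ 4) + 1) = (1 *+ 4) * (a ^+ 2 - (a + k)) :> K by ring.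
  by rewrite h subrr mulr0 eqxx.
- rewrite (psi0 chK) (psi_int chK) mul0r add0r in h.
  apply/negP: (nosq chK hl (val x)%:Z).
  by rewrite !(intrB, rmorphXn) /= -!pmulrn; move: h; rewrite /psi => ->; rewrite subrr eqxx.
Qed.

Lemma fixed_in_image (u : K) : u ^+ N = u -> exists x, u = psi x.
Proof.
move=> hu.
case: (boolP [exists x, u == psi x]) => [/existsP [x /eqP] | /existsPn H]; first by eauto.
exfalso.
have N1 := N_gt1 chK.
pose P : {poly K} := 'X^N - 'X.
have sP : size P = N.+1.
  by rewrite /P size_addl ?size_polyXn // size_opp size_polyX ltnS.
have := @max_poly_roots K P (u :: map psi (enum 'Z_N)).
rewrite -size_poly_eq0 sP /= => /(_ isT).
have -> : root P u by rewrite /root /P !hornerE hu subrr eqxx.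
have -> : all (root P) [seq psi i | i <- enum 'Z_N].
  by apply/allP => _ /mapP [y _ ->]; rewrite /root !hornerE (psi_fix chK) subrr.
rewrite /= map_inj_uniq ?enum_uniq ?andbT; last exact: (psi_inj chK).
have -> : u \notin [seq psi i | i <- enum 'Z_N].
  by apply/mapP => -[y _ /eqP]; rewrite (negbTE (H y)).
by rewrite size_map -cardE card_ord Zp_cast // ltnn => /(_ isT isT).
Qed.

End Field2.

Lemma MR (L : fieldType) (x : L) (s u : nat) : x ^+ (2 ^ s * u) = 1 ->
  x ^+ u = 1 \/ exists r : nat, (r < s)%N /\ x ^+ (2 ^ r * u) = -1.
Proof.
elim: s => [|s IH]; first by rewrite expn0 mul1n => h; left.
have -> : (2 ^ s.+1 * u = (2 ^ s * u) * 2)%N by rewrite expnS -mulnA mulnC.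
rewrite exprM => /eqP; rewrite sqrf_eq1 => /orP [/eqP h | /eqP h].
  by case: (IH h) => [?|[r [hr e]]]; [left | right; exists r; split => //; apply: ltnW].
by right; exists s.
Qed.

Section Ext.
Variables (N : nat) (L : fieldType) (chL : N \in [pchar L]) (D : int).
Hypothesis hl : legendre D N = -1.
Local Notation psi := (@psi N L).
Let p := psi (cp N D).
Let q := psi (cq N D).
Variable t : L.
Hypothesis ht : t ^+ 2 = p * t + q.

Lemma expND (u v : L) : (u + v) ^+ N = u ^+ N + v ^+ N.
Proof. by rewrite -!(pFrobenius_autE chL) rmorphD. Qed.

Lemma tN_neq : t ^+ N != t.
Proof.
apply/negP => /eqP /(fixed_in_image chL) [x hx].
by move: ht; rewrite hx; apply/eqP; apply: (noroot chL hl).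
Qed.

Lemma tN : t ^+ N = p - t.
Proof.
set y := t ^+ N.
have hy : y ^+ 2 = p * y + q.
  by rewrite /y -exprM mulnC exprM ht expND exprMn /p /q !(psi_fix chL).
have : (y - t) * (y - (p - t)) = 0.
  have -> : (y - t) * (y - (p - t)) = y ^+ 2 - p * y - (t ^+ 2 - p * t) by ring.
  by rewrite hy ht; ring.
move/eqP; rewrite mulf_eq0 !subr_eq0 => /orP [/eqP h|/eqP //].
by have := tN_neq; rewrite -/y h eqxx.
Qed.

Definition phi (w : elt N) : L := psi w.1 + psi w.2 * t.

Lemma phi_inj : injective phi.
Proof.
move=> [a b] [c d]; rewrite /phi /= => e.
case: (eqVneq b d) => [Ebd | Nbd].
  by move: e; rewrite Ebd => /addIr /(psi_inj chL) ->.
exfalso.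
have h1 : t * psi (b - d) = psi (c - a).
  apply/eqP; rewrite -subr_eq0 !(psiB chL).
  have -> : t * (psi b - psi d) - (psi c - psi a) = (psi a + psi b * t) - (psi c + psi d * t) by ring.
  by rewrite e subrr.
have h2 : t ^+ N * psi (b - d) = psi (c - a).
  by rewrite -(psi_fix chL (b - d)) -exprMn h1 (psi_fix chL).
have : (t ^+ N - t) * psi (b - d) = 0 by rewrite mulrBl h1 h2 subrr.
move/eqP; rewrite mulf_eq0 subr_eq0 (negbTE tN_neq) /= -(psi0 chL).
move=> /eqP /(psi_inj chL) /eqP; by rewrite subr_eq0 (negbTE Nbd).
Qed.

Lemma psi_emul (a b c d : 'Z_N) :
  psi (emul D (a, b) (c, d)).1 = psi a * psi c + psi b * psi d * q /\
  psi (emul D (a, b) (c, d)).2 = psi a * psi d + psi b * psi c + psi b * psi d * p.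
Proof.
rewrite /emul /p /q /cp /cq; case: (D_is_1mod4 D) => /=;
  rewrite !(psiD chL, psiM chL, psi_int chL, psi1 chL, psi0 chL) /=; split; ring.
Qed.

Lemma phi_mul x y : phi (emul D x y) = phi x * phi y.
Proof.
case: x y => [a b] [c d]; rewrite /phi; have [-> ->] := psi_emul a b c d.
rewrite /=.
have -> : (psi a + psi b * t) * (psi c + psi d * t) =
  psi a * psi c + psi b * psi d * t ^+ 2 + (psi a * psi d + psi b * psi c) * t by ring.
rewrite ht; ring.
Qed.

Lemma phi_epow w k : phi (epow D w k) = phi w ^+ k.
Proof.
elim: k => [|k IH]; first by rewrite /phi /= (psi1 chL) (psi0 chL) mul0r addr0.
by rewrite /epow iterS -/(epow D w k) phi_mul IH exprS.
Qed.

Lemma phi_mone : phi (emone N) = -1.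
Proof. by rewrite /phi /= (psiN chL) (psi1 chL) (psi0 chL) mul0r addr0. Qed.

Lemma psi_enorm a b :
  psi (enorm D (a, b)) = psi a ^+ 2 + p * psi a * psi b - q * psi b ^+ 2.
Proof.
rewrite /enorm /p /q /cp /cq; case h4: (D_is_1mod4 D) => /=;
  rewrite !(psiD chL, psiM chL, psiN chL, psiB chL, psi_int chL, psi1 chL, psi0 chL) /=.
- have [_ ->] := div4 h4.
  rewrite mulrNz; ring.
- ring.
Qed.

Lemma phi_norm w : inG D w -> phi w ^+ N.+1 = 1.
Proof.
case: w => a b; rewrite /inG => hn.
rewrite exprS /phi /= expND exprMn !(psi_fix chL) tN.
rewrite -(psi1 chL) -hn psi_enorm.
have -> : (psi a + psi b * t) * (psi a + psi b * (p - t)) =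
  psi a ^+ 2 + p * psi a * psi b + psi b ^+ 2 * (p * t - t ^+ 2) by ring.
rewrite ht; ring.
Qed.

End Ext.



Theorem theorem1p4 (N : nat) (D : int) (s u : nat) (w : elt N) :
  prime N -> odd N -> squarefree D -> legendre D N = -1 ->
  (N.+1 = 2 ^ s * u)%N -> odd u -> (1 <= s)%N ->
  inG D w -> w <> eone N -> w <> emone N ->
  epow D w u = eone N \/
  exists r : nat, (r < s)%N /\ epow D w (2 ^ r * u)%N = emone N.
Proof.
move=> Np Nodd _ hl hNsu _ _ hw _ _.
have chF : N \in [pchar 'F_N] := pchar_Fp Np.
pose a : 'F_N := psi 'F_N (cp N D).
pose b : 'F_N := psi 'F_N (cq N D).
pose P : {poly 'F_N} := 'X^2 + ((- a)%:P * 'X + (- b)%:P).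
have sP : size P = 3%N.
  rewrite /P size_addl ?size_polyXn // size_MXaddC.
  by case: ifP => //= _; rewrite size_polyC; case: (_ != 0).
have irrP : irreducible_poly P.
  apply: cubic_irreducible; first by rewrite sP.
  move=> r.
  have [x ->] : exists x : 'Z_N, r = psi 'F_N x.
    apply: (fixed_in_image chF).
    by have := expf_card r; rewrite card_Fp.
  apply/negP => hr; apply: (negP (noroot chF hl x)).
  apply/eqP; apply/eqP; rewrite -subr_eq0; move: hr; rewrite /root /P !(hornerD, hornerM, hornerN, hornerC, hornerX, hornerXn).
  by rewrite /a /b => /eqP <-; apply/eqP; ring.
have [L _ [z hz _]] := irredp_FAdjoin irrP.
have chL : N \in [pchar L] by rewrite (pchar_lalg L).
have ht : z ^+ 2 = psi L (cp N D) * z + psi L (cq N D).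
  move: hz; rewrite /root /P.
  rewrite !(rmorphD, rmorphM, map_polyXn, map_polyC, map_polyX) /= !hornerE.
  rewrite !(map_polyX, map_polyC) !(hornerD, hornerM, hornerC, hornerX) /= !scaleNr /a /b.
  have psi_alg x : (psi 'F_N x)%:A = psi L x :> L.
    by rewrite /psi -[_%:A]/(in_alg L _) rmorph_nat.
  rewrite !psi_alg => /eqP h.
  set A := psi L _; set B := psi L _.
  have -> : z ^+ 2 = (z * z + - A * z + - B) + (A * z + B) by ring.
  by rewrite h add0r.
have hn := phi_norm chL hl ht hw.
rewrite hNsu in hn.
have e1 : phi z (eone N) = 1 by have := phi_epow chL ht w 0.
case: (MR hn) => [h | [r [hr h]]]; [left | right; exists r; split => //];
  apply: (phi_inj chL hl ht); rewrite (phi_epow chL ht) h.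
  by rewrite e1.
by rewrite (phi_mone chL).
Qed.
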